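(* Let $n=3$. (i) For every $k\ge1$ and $i\in\{1,2,3\}$ there exist constants $c_{3,k,i}$ and $C_{3,k,i}$ such that for every $w\in H_{3,k,i}$, $$Q_{V_3}(w)=c_{3,k,i}\,\mathrm{Av}(|\nabla_T w|^2),\qquad Q_3(w)=C_{3,k,i}\,\mathrm{Av}(|\nabla_T w|^2).$$ (ii) For all $k,l\ge1$ and $i,j\in\{1,2,3\}$ with $(k,i)\ne(l,j)$, and all $w_{k,i}\in H_{3,k,i}$, $w_{l,j}\in H_{3,l,j}$, one has $Q_{V_3}(w_{k,i},w_{l,j})=0$ and $Q_3(w_{k,i},w_{l,j})=0$.
   Context: $\mathbb S^2\subset\mathbb R^3$ unit sphere, $B_1$ unit ball; $\mathrm{Av}(f):=\frac{1}{\mathcal H^2(\mathbb S^2)}\int_{\mathbb S^2}f\,d\mathcal H^2$. $\{\tau_1,\tau_2\}$ local orthonormal tangent frame; $\nabla_T w$ tangential gradient ($3\times2$ matrix with entries $\partial_{\tau_j}w^i$), $\nabla_T w^j$ tangential gradient vector of the $j$-th component, $\mathrm{div}_{\mathbb S^2}w:=\sum_i\langle\partial_{\tau_i}w,\tau_i\rangle$, $|\cdot|$ Frobenius norm; $w_h$ componentwise harmonic extension to $\overline{B_1}$. $H_3:=\{w\in W^{1,2}(\mathbb S^2;\mathbb R^3):\mathrm{Av}(w)=0,\mathrm{Av}(\langle w,x\rangle)=0\}$; $A(w):=(\mathrm{div}_{\mathbb S^2}w)x-\sum_{j=1}^3x_j\nabla_T w^j$. Bilinear forms: $Q_{V_3}(v,w):=\frac32\mathrm{Av}(\langle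 v,A(w)\rangle)$, $Q_3(v,w):=\frac34\mathrm{Av}(\nabla_T v:\nabla_T w)-Q_{V_3}(v,w)$, with $Q_{V_3}(w)=Q_{V_3}(w,w)$, $Q_3(w)=Q_3(w,w)$. For $k\ge1$: $H_{3,k}$ is the subspace of $H_3$ of maps whose components are $k$-th order spherical harmonics; $H_{3,k,\mathrm{sol}}:=\{w\in H_{3,k}:\mathrm{div}\,w_h\equiv0\text{ in }B_1\}$; $H_{3,k,1}:=\{w\in H_{3,k,\mathrm{sol}}:A(w)=-kw\}$, $H_{3,k,2}:=\{w\in H_{3,k,\mathrm{sol}}:A(w)=w\}$, and $H_{3,k,3}$ is the $W^{1,2}$-orthogonal complement of $H_{3,k,\mathrm{sol}}$ in $H_{3,k}$. *)

(* Defs.v *)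
From HB Require Import structures.
From mathcomp Require Import all_boot all_order all_algebra.
From mathcomp Require Import mpoly.
From mathcomp Require Import all_classical all_reals all_analysis.
Set Implicit Arguments. Unset Strict Implicit. Unset Printing Implicit Defensive.
Import Order.TTheory GRing.Theory Num.Theory.
Import numFieldNormedType.Exports.
Local Open Scope classical_set_scope.
Local Open Scope ring_scope.

Notation poly3 R := (mpoly.mpoly 3 R).
(* A map S^2 -> R^3 given by three polynomial components. *)
Definition vfield (R : realType) := 'I_3 -> poly3 R.
Definition pt (R : realType) := 'I_3 -> R.

Section Defs.
Variable R : realType.

Definition ev (p : poly3 R) (x : pt R) : R := mpoly.meval x p.
Definition d (j : 'I_3) (p : poly3 R) : poly3 R := mpoly.mderiv j p.
Definition dot (u v : pt R) : R := \sum_(i < 3) u i * v i.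

Definition on_sphere (x : pt R) : Prop := dot x x = 1.
Definition in_open_ball (x : pt R) : Prop := dot x x < 1.

Definition homog_deg (k : nat) (p : poly3 R) : Prop :=
  forall m : mpoly.multinom 3, mpoly.mcoeff m p != 0 -> mpoly.mdeg m = k.
Definition lap (p : poly3 R) : poly3 R := \sum_(i < 3) d i (d i p).

(* p restricted to S^2 is a k-th order spherical harmonic:
   p is a homogeneous harmonic polynomial of degree k *)
Definition sph_harm (k : nat) (p : poly3 R) : Prop := homog_deg k p /\ lap p = 0.

Definition sph (t f : R) : pt R := fun i =>
  match val i with
  | 0 => sin t * cos f
  | 1 => sin t * sin f
  | _ => cos t
  end.

(* integral over S^2 w.r.t. H^2 (via spherical coordinates) *)
Definition sint (g : pt R -> R) : R :=
  Rintegral lebesgue_measure `[0, 2 * pi]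
    (fun f => Rintegral lebesgue_measure `[0, pi]
       (fun t => g (sph t f) * sin t)).

Definition Av (g : pt R -> R) : R := sint g / sint (fun _ => 1).

Definition grad (p : poly3 R) (x : pt R) : pt R := fun j => ev (d j p) x.
Definition gradT (p : poly3 R) (x : pt R) : pt R :=
  fun j => grad p x j - dot x (grad p x) * x j.

Definition evv (w : vfield R) (x : pt R) : pt R := fun i => ev (w i) x.

Definition gradT_dot (v w : vfield R) (x : pt R) : R :=
  \sum_(i < 3) dot (gradT (v i) x) (gradT (w i) x).

(* div_{S^2} w = sum_a <d_{tau_a} w, tau_a> = tr(P Dw P), P = I - x x^T *)
Definition divS (w : vfield R) (x : pt R) : R :=
  \sum_(i < 3) \sum_(j < 3)
    ((i == j)%:R - x i * x j) * ev (d j (w i)) x.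

Definition Aop (w : vfield R) (x : pt R) : pt R :=
  fun l => divS w x * x l - \sum_(j < 3) x j * gradT (w j) x l.

Definition QV3 (v w : vfield R) : R :=
  3 / 2 * Av (fun x => dot (evv v x) (Aop w x)).

Definition Q3 (v w : vfield R) : R :=
  3 / 4 * Av (gradT_dot v w) - QV3 v w.

(* W^{1,2}(S^2;R^3) inner product (normalised by 1/H^2(S^2)) *)
Definition W12 (v w : vfield R) : R :=
  Av (fun x => dot (evv v x) (evv w x)) + Av (gradT_dot v w).

Definition H3k (k : nat) (w : vfield R) : Prop :=
  (forall i, sph_harm k (w i)) /\
  (forall i, Av (fun x => ev (w i) x) = 0) /\
  Av (fun x => dot (evv w x) x) = 0.

(* H_{3,k,sol}; for components that are homogeneous harmonic polynomials,
   the componentwise harmonic extension w_h to the closed ball is w itself *)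
Definition H3k_sol (k : nat) (w : vfield R) : Prop :=
  H3k k w /\
  forall x, in_open_ball x -> \sum_(i < 3) ev (d i (w i)) x = 0.

Definition H3ki (k i : nat) (w : vfield R) : Prop :=
  match i with
  | 1 => H3k_sol k w /\ forall x, on_sphere x ->
           Aop w x = (fun l => - (k%:R) * evv w x l)
  | 2 => H3k_sol k w /\ forall x, on_sphere x -> Aop w x = evv w x
  | 3 => H3k k w /\ forall v, H3k_sol k v -> W12 v w = 0
  | _ => False
  end.

End Defs.

(* Main.v *)
Require Import Defs.
From HB Require Import structures.
From mathcomp Require Import all_boot all_order all_algebra.
From mathcomp Require Import mpoly ssrcomplements.
From mathcomp Require Import all_classical all_reals all_analysis.
From mathcomp Require Import ring lra zify.
Import Order.TTheory GRing.Theory Num.Theory.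
Import numFieldNormedType.Exports.
Local Open Scope classical_set_scope.
Local Open Scope ring_scope.

Notation i0 := (@ord0 2).
Notation i1 := (@lift 3 ord0 (@ord0 1)).
Notation i2 := (@lift 3 ord0 (@lift 2 ord0 (@ord0 0))).

Section PartA.
Variable R : realType.
Local Notation mu := (@lebesgue_measure R).

Lemma scE (a b : R) : a *: b = a * b. Proof. by []. Qed.

Lemma cont_of_derive (F f : R -> R) : (forall x : R, is_derive x (1:R) F (f x)) -> continuous F.
Proof.
move=> dF x; apply: differentiable_continuous.
have := @ex_derive R R^o R^o x 1 F (f x) (dF x); by move/derivable1_diffP.
Qed.

Lemma RFTC (F f : R -> R) a b : a < b -> continuous f ->
  (forall x : R, is_derive x (1:R) F (f x)) -> Rintegral mu `[a, b] f = F b - F a.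
Proof.
move=> ab cf dF; rewrite /Rintegral (@continuous_FTC2 _ f F a b ab).
- by rewrite -EFinB.
- exact: continuous_subspaceT.
- have cF := @cont_of_derive F f dF.
  split.
  + by move=> x _; exact: (@ex_derive R R^o R^o x 1 F (f x) (dF x)).
  + exact: cvg_at_right_filter (cF a).
  + exact: cvg_at_left_filter (cF b).
- by move=> x _; rewrite derive1E; exact: derive_val.
Qed.

Lemma Rint_integrable (g : R -> R) a b : continuous g ->
  mu.-integrable `[a, b] (EFin \o g).
Proof.
move=> cg; apply: continuous_compact_integrable; first exact: segment_compact.
exact: continuous_subspaceT.
Qed.

Lemma Rint_lin (g h : R -> R) (al be : R) a b : continuous g -> continuous h ->
  Rintegral mu `[a, b] (fun x => al * g x + be * h x) =
  al * Rintegral mu `[a, b] g + be * Rintegral mu `[a, b] h.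
Proof.
move=> cg ch.
have cal : continuous (fun x => al * g x).
  by move=> x; apply: cvgM; [exact: cvg_cst|exact: cg].
have cbe : continuous (fun x => be * h x).
  by move=> x; apply: cvgM; [exact: cvg_cst|exact: ch].
rewrite RintegralD //; try exact: Rint_integrable.
by rewrite !RintegralZl //; exact: Rint_integrable.
Qed.

Lemma sc_derive (a b : nat) (x : R) :
  is_derive x (1:R) (fun t : R => sin t ^+ a * cos t ^+ b)
    (a%:R * (sin x ^+ a.-1 * cos x ^+ b.+1) - b%:R * (sin x ^+ a.+1 * cos x ^+ b.-1)).
Proof.
have H := is_deriveM (is_deriveX a (is_derive_sin x)) (is_deriveX b (is_derive_cos x)).
have -> : (fun t => sin t ^+ a * cos t ^+ b) = (sin ^+ a * cos ^+ b)%R :> (R -> R).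
  by apply/funext => t; rewrite /= !exprfctE.
apply: is_derive_eq H _.
rewrite /= !exprfctE /= !scE.
case: a => [|a]; case: b => [|b] /=; rewrite ?mul0r ?mulr0 ?expr0 ?(exprS (sin x)) ?(exprS (cos x)); ring.
Qed.

Lemma cont_sc (a b : nat) : continuous (fun t : R => sin t ^+ a * cos t ^+ b).
Proof. exact: (@cont_of_derive _ _ (@sc_derive a b)). Qed.


Definition J (L : R) (p q : nat) : R :=
  Rintegral mu `[0, L] (fun t => sin t ^+ p * cos t ^+ q).

Lemma cont_lin2 (c1 c2 : R) a1 b1 a2 b2 : continuous (fun x : R =>
  c1 * (sin x ^+ a1 * cos x ^+ b1) - c2 * (sin x ^+ a2 * cos x ^+ b2)).
Proof.
move=> x; apply: cvgB; apply: cvgM; try exact: cvg_cst; exact: cont_sc.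
Qed.

Lemma J_FTC L p q : 0 < L -> sin L = 0 ->
  Rintegral mu `[0, L] (fun x =>
    p.+1%:R * (sin x ^+ p * cos x ^+ q.+2) - q.+1%:R * (sin x ^+ p.+2 * cos x ^+ q)) = 0.
Proof.
move=> L0 sL; rewrite (@RFTC _ _ 0 L L0 (@cont_lin2 _ _ _ _ _ _) (@sc_derive p.+1 q.+1)).
by rewrite sL sin0 !expr0n /= !mul0r subrr.
Qed.

Lemma J_rec1 L p q : 0 < L -> sin L = 0 ->
  (p + q + 2)%:R * J L p q.+2 = q.+1%:R * J L p q.
Proof.
move=> L0 sL; have := J_FTC L p q L0 sL.
rewrite (_ : (fun x => _) = (fun x => (p + q + 2)%:R * (sin x ^+ p * cos x ^+ q.+2)
   + (- q.+1%:R) * (sin x ^+ p * cos x ^+ q))); last first.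
  apply/funext => x; rewrite -(addn2 p) -(addn2 q) !exprD sin2cos2 !natrD; ring.
rewrite Rint_lin; [|exact: cont_sc|exact: cont_sc].
by rewrite mulNr => /eqP; rewrite addr_eq0 => /eqP ->; rewrite opprK.
Qed.

Lemma J_rec2 L p q : 0 < L -> sin L = 0 ->
  (p + q + 2)%:R * J L p.+2 q = p.+1%:R * J L p q.
Proof.
move=> L0 sL; have := J_FTC L p q L0 sL.
rewrite (_ : (fun x => _) = (fun x => (- (p + q + 2)%:R) * (sin x ^+ p.+2 * cos x ^+ q)
   + p.+1%:R * (sin x ^+ p * cos x ^+ q))); last first.
  apply/funext => x; rewrite -(addn2 p) -(addn2 q) !exprD cos2sin2 !natrD; ring.
rewrite Rint_lin; [|exact: cont_sc|exact: cont_sc].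
by rewrite mulNr => /eqP; rewrite addr_eq0 => /eqP /oppr_inj.
Qed.

Lemma J_basec L p : 0 < L -> sin L = 0 -> J L p 1 = 0.
Proof.
move=> L0 sL.
have := @RFTC _ _ 0 L L0 (@cont_lin2 p.+1%:R 0 p 1 p.+2 0) (@sc_derive p.+1 0).
rewrite sL sin0 !expr0n /= !mul0r subrr => H.
apply: (@mulfI _ p.+1%:R); first by rewrite pnatr_eq0.
rewrite mulr0 -H /J -RintegralZl; last exact: (@Rint_integrable _ 0 L (@cont_sc p 1)).
  by apply: eq_Rintegral => x _ /=; rewrite !mul0r subr0.
exact: measurable_itv.
Qed.

Lemma J_bases L q : 0 < L -> sin L = 0 -> cos L = 1 -> J L 1 q = 0.
Proof.
move=> L0 sL cL.
have := @RFTC _ _ 0 L L0 (@cont_lin2 0 q.+1%:R 0 q.+2 1 q) (@sc_derive 0 q.+1).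
rewrite cL cos0 !expr1n /= !mul1r subrr => H.
apply: (@mulfI _ (- q.+1%:R)); first by rewrite oppr_eq0 pnatr_eq0.
rewrite mulr0 -H /J -RintegralZl; last exact: (@Rint_integrable _ 0 L (@cont_sc 1 q)).
  by apply: eq_Rintegral => x _ /=; rewrite !mul0r sub0r mulNr.
exact: measurable_itv.
Qed.


Lemma cont_sum (X : Type) (s : seq X) (c : X -> R) (g : X -> R -> R) :
  (forall m, continuous (g m)) ->
  continuous (fun x => \sum_(m <- s) c m * g m x).
Proof.
move=> cg; elim: s => [|m s IH] x.
  rewrite (_ : (fun x => _) = (fun=> 0)); first exact: cvg_cst.
  by apply/funext => y; rewrite big_nil.
rewrite (_ : (fun x => _) = (fun x => c m * g m x + \sum_(m <- s) c m * g m x)).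
  by apply: cvgD; [apply: cvgM; [exact: cvg_cst|exact: cg]|exact: IH].
by apply/funext => y; rewrite big_cons.
Qed.

Lemma Rint_sum (X : Type) (s : seq X) (c : X -> R) (g : X -> R -> R) a b :
  (forall m, continuous (g m)) ->
  Rintegral mu `[a, b] (fun x => \sum_(m <- s) c m * g m x) =
  \sum_(m <- s) c m * Rintegral mu `[a, b] (g m).
Proof.
move=> cg; elim: s => [|m s IH].
  rewrite big_nil (_ : (fun x => _) = (fun=> 0 * 0)).
    by rewrite RintegralZl ?mul0r //; apply: Rint_integrable => x; exact: cvg_cst.
  by apply/funext => y; rewrite big_nil mul0r.
rewrite big_cons -IH -(mul1r (Rintegral _ _ (fun x => \sum_(m <- s) _))).
rewrite -Rint_lin //; last exact: cont_sum.
by congr Rintegral; apply/funext => y; rewrite big_cons mul1r.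
Qed.


Definition Imon (m : 'X_{1..3}) : R :=
  J (2 * pi) (m i1) (m i0) * J pi (m i0 + m i1).+1 (m i2).

Lemma sint_ev (p : poly3 R) :
  sint (ev p) = \sum_(m <- mpoly.msupp p) p@_m * Imon m.
Proof.
rewrite /sint.
rewrite (_ : (fun f => _) = (fun f => \sum_(m <- mpoly.msupp p)
    (p@_m * J pi (m i0 + m i1).+1 (m i2)) * (sin f ^+ m i1 * cos f ^+ m i0))).
  rewrite Rint_sum; last by move=> m; exact: cont_sc.
  by apply: eq_bigr => m _; rewrite /Imon /J; ring.
apply/funext => f.
rewrite (_ : (fun t => _) = (fun t => \sum_(m <- mpoly.msupp p)
    (p@_m * (sin f ^+ m i1 * cos f ^+ m i0)) *
    (sin t ^+ (m i0 + m i1).+1 * cos t ^+ m i2))).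
  rewrite Rint_sum; last by move=> m; exact: cont_sc.
  by apply: eq_bigr => m _; rewrite /J; ring.
apply/funext => t; rewrite /ev mevalE big_distrl /=; apply: eq_bigr => m _.
rewrite !big_ord_recl big_ord0 /sph /=.
rewrite !exprMn exprS exprD; ring.
Qed.


Notation J2 := (J (2 * pi)).
Notation Jp := (J pi).

Lemma twopi_gt0 : 0 < 2 * pi :> R.
Proof. by rewrite mulr_gt0 // pi_gt0. Qed.
Lemma sin_twopi : sin (2 * pi) = 0 :> R.
Proof. by rewrite mulr_natl sin2pi. Qed.
Lemma cos_twopi : cos (2 * pi) = 1 :> R.
Proof. by rewrite mulr_natl cos2pi. Qed.

Lemma Irec0 a b c : (a + b + c + 2)%:R * (J2 b a.+1 * Jp (a.+1 + b).+1 c) =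
  a%:R * (J2 b a.-1 * Jp (a.-1 + b).+1 c).
Proof.
case: a => [|a].
  by rewrite J_basec ?mul0r ?mulr0 //; [exact: twopi_gt0|exact: sin_twopi].
have e1 := J_rec1 (2 * pi) b a twopi_gt0 sin_twopi.
have e2 := J_rec2 pi (a + b).+1 c (@pi_gt0 R) (@sinpi R).
rewrite /= (_ : (a.+2 + b).+1 = (a + b).+3)%N; last lia.
rewrite (_ : (a.+1 + b + c + 2)%:R * (J2 b a.+2 * Jp (a + b).+3 c) =
   J2 b a.+2 * (((a + b).+1 + c + 2)%:R * Jp (a + b).+3 c)); last by rewrite !natrD; ring.
rewrite e2 (_ : J2 b a.+2 * ((a + b).+2%:R * Jp (a + b).+1 c) =
   ((b + a + 2)%:R * J2 b a.+2) * Jp (a + b).+1 c); last by rewrite !natrD; ring.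
by rewrite e1 -mulrA.
Qed.

Lemma Irec1 a b c : (a + b + c + 2)%:R * (J2 b.+1 a * Jp (a + b.+1).+1 c) =
  b%:R * (J2 b.-1 a * Jp (a + b.-1).+1 c).
Proof.
case: b => [|b].
  by rewrite J_bases ?mul0r ?mulr0 //; [exact: twopi_gt0|exact: sin_twopi|exact: cos_twopi].
have e1 := J_rec2 (2 * pi) b a twopi_gt0 sin_twopi.
have e2 := J_rec2 pi (a + b).+1 c (@pi_gt0 R) (@sinpi R).
rewrite /= (_ : (a + b.+2).+1 = (a + b).+3)%N; last lia.
rewrite (_ : (a + b.+1 + c + 2)%:R * (J2 b.+2 a * Jp (a + b).+3 c) =
   J2 b.+2 a * (((a + b).+1 + c + 2)%:R * Jp (a + b).+3 c)); last by rewrite !natrD; ring.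
rewrite e2 (_ : J2 b.+2 a * ((a + b).+2%:R * Jp (a + b).+1 c) =
   ((b + a + 2)%:R * J2 b.+2 a) * Jp (a + b).+1 c); last by rewrite !natrD; ring.
by rewrite e1 -mulrA.
Qed.

Lemma Irec2 a b c : (a + b + c + 2)%:R * (J2 b a * Jp (a + b).+1 c.+1) =
  c%:R * (J2 b a * Jp (a + b).+1 c.-1).
Proof.
case: c => [|c].
  by rewrite (@J_basec pi) ?mul0r ?mulr0 //; [exact: (@pi_gt0 R)|exact: (@sinpi R)].
have e2 := J_rec1 pi (a + b).+1 c (@pi_gt0 R) (@sinpi R).
rewrite /= (_ : (a + b + c.+1 + 2)%:R * (J2 b a * Jp (a + b).+1 c.+2) =
   J2 b a * (((a + b).+1 + c + 2)%:R * Jp (a + b).+1 c.+2)); last by rewrite !natrD; ring.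
by rewrite e2; ring.
Qed.

End PartA.
Section PartB.
Variable R : realType.
Local Notation P := (poly3 R).

Definition Lw (p : P) : R := \sum_(m <- mpoly.msupp p) p@_m * Imon R m.

Lemma LwE (p : P) k : (mpoly.msize p <= k)%N ->
  Lw p = \sum_(m : 'X_{1..3 < k}) p@_m * Imon R m.
Proof.
move=> le_pk; set I : subFinType _ := 'X_{1..3 < k}.
rewrite /Lw (big_mksub I) ?mpoly.msupp_uniq //=; first last.
  by move=> x /mpoly.msize_mdeg_lt /leq_trans; apply.
rewrite big_rmcond //= => j /mpoly.memN_msupp_eq0 ->.
by rewrite mul0r.
Qed.

Lemma LwD (p q : P) : Lw (p + q) = Lw p + Lw q.
Proof.
pose k := maxn (mpoly.msize (p + q)) (maxn (mpoly.msize p) (mpoly.msize q)).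
rewrite !(@LwE _ k) -?big_split /=; try by rewrite /k; lia.
by apply: eq_bigr => m _; rewrite mpoly.mcoeffD mulrDl.
Qed.

Lemma LwZ c (p : P) : Lw (c *: p) = c * Lw p.
Proof.
pose k := mpoly.msize p.
rewrite (@LwE (c *: p) k (mpoly.msizeZ_le _ _)) (@LwE p k (leqnn _)) mulr_sumr.
by apply: eq_bigr => m _; rewrite mpoly.mcoeffZ; ring.
Qed.

Lemma Lw0 : Lw 0 = 0.
Proof. by rewrite -(scale0r 0) LwZ mul0r. Qed.

Lemma LwN (p : P) : Lw (- p) = - Lw p.
Proof. by rewrite -scaleN1r LwZ mulN1r. Qed.

Lemma LwB (p q : P) : Lw (p - q) = Lw p - Lw q.
Proof. by rewrite LwD LwN. Qed.

Lemma Lw_sum (I : Type) (s : seq I) (F : I -> P) :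
  Lw (\sum_(i <- s) F i) = \sum_(i <- s) Lw (F i).
Proof.
elim: s => [|i s IH]; first by rewrite !big_nil Lw0.
by rewrite !big_cons LwD IH.
Qed.

Lemma LwX m : Lw 'X_[m] = Imon R m.
Proof. by rewrite /Lw mpoly.msuppX big_seq1 mpoly.mcoeffX eqxx mul1r. Qed.


Lemma mdeg3 (m : 'X_{1..3}) : mpoly.mdeg m = (m i0 + m i1 + m i2)%N.
Proof. by rewrite mpoly.mdegE !big_ord_recl big_ord0 addn0 addnA. Qed.

Lemma Imon_rec (m : 'X_{1..3}) (i : 'I_3) :
  (mpoly.mdeg m + 2)%:R * Imon R (m + U_(i))%MM = (m i)%:R * Imon R (m - U_(i))%MM.
Proof.
rewrite mdeg3 /Imon !mpoly.mnmDE !mpoly.mnmBE !mpoly.mnm1E.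
have [->|[->|->]] : i = i0 \/ i = i1 \/ i = i2.
- case: i => [[|[|[|//]]] Hi]; [left|right;left|right;right]; exact: val_inj.
- by rewrite /= !addn0 !subn0 addn1 subn1; exact: Irec0.
- by rewrite /= !addn0 !subn0 addn1 subn1; exact: Irec1.
- by rewrite /= !addn0 !subn0 addn1 subn1; exact: Irec2.
Qed.

Definition Eop (p : P) : P := \sum_(j < 3) 'X_j * d j p.

Lemma EopD p q : Eop (p + q) = Eop p + Eop q.
Proof. by rewrite /Eop -big_split; apply: eq_bigr => j _; rewrite /d mpoly.mderivD mulrDr. Qed.

Lemma EopZ c p : Eop (c *: p) = c *: Eop p.
Proof. by rewrite /Eop scaler_sumr; apply: eq_bigr => j _; rewrite /d mpoly.mderivZ scalerAr. Qed.

Lemma Eop0 : Eop 0 = 0.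
Proof. by rewrite /Eop big1 // => j _; rewrite /d mpoly.mderiv0 mulr0. Qed.

Lemma EopX m : Eop 'X_[m] = (mpoly.mdeg m)%:R *: 'X_[m].
Proof.
rewrite /Eop mpoly.mdegE natr_sum scaler_suml; apply: eq_bigr => j _.
rewrite /d mpoly.mderivX -scalerAr.
have [->|mj] := eqVneq (m j) 0%N; first by rewrite !scale0r.
congr (_ *: _); rewrite -mpoly.mpolyXD addmC mpoly.submK //.
by apply/mpoly.mnm_lepP => l; rewrite mpoly.mnm1E; case: eqP => // <-; rewrite lt0n.
Qed.

Lemma Fid (G : P) (i : 'I_3) :
  Lw (d i G) = Lw ('X_i * Eop G) + 2 * Lw ('X_i * G).
Proof.
elim/mpoly.mpolyind: G => [|c m p _ _ IH].
  by rewrite /d mpoly.mderiv0 Eop0 mulr0 Lw0 mulr0 addr0.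
rewrite /d mpoly.mderivD mpoly.mderivZ EopD EopZ !mulrDr LwD IH -!/(d _ _).
rewrite -!scalerAr !LwD !LwZ.
rewrite /d mpoly.mderivX EopX -scalerAr !LwZ.
rewrite !(mulrC 'X_i 'X_[m]) -mpoly.mpolyXD !LwX.
rewrite -(Imon_rec m i) natrD; ring.
Qed.

End PartB.

Section PartC.
Variable R : realType.
Local Notation P := (poly3 R).
Local Notation d := (@d R).
Local Notation lap := (@lap R).
Local Notation Lw := (@Lw R).
Local Notation Eop := (@Eop R).

Lemma homog_sum (I : Type) (s : seq I) (F : I -> P) k :
  (forall i, F i \is k.-homog) -> \sum_(i <- s) F i \is k.-homog.
Proof.
move=> H; elim: s => [|i s IH]; first by rewrite big_nil; exact: dhomog0.
by rewrite big_cons; apply: dhomogD.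
Qed.

Lemma homog_sumP (I : Type) (s : seq I) (Pr : pred I) (F : I -> P) k :
  (forall i, Pr i -> F i \is k.-homog) -> \sum_(i <- s | Pr i) F i \is k.-homog.
Proof.
move=> H; elim: s => [|i s IH]; first by rewrite big_nil; exact: dhomog0.
rewrite big_cons; case: ifP => Pi //; exact: dhomogD (H i Pi) IH.
Qed.

Lemma dhomogP' k (p : P) : p \is k.-homog -> forall m, m \in msupp p -> mdeg m = k.
Proof. by move=> /dhomogP H m /H. Qed.

Lemma dhomogX' k (m : 'X_{1..3}) : mdeg m = k -> ('X_[m] : P) \is k.-homog.
Proof. by move=> H; rewrite dhomogX; apply/eqP; exact: H. Qed.

Lemma homogX (i : 'I_3) : ('X_i : P) \is 1.-homog.
Proof. by apply: dhomogX'; rewrite mdeg1. Qed.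

Lemma homog_d (p : P) k i : p \is k.-homog -> d i p \is k.-1.-homog.
Proof.
move=> /dhomogP' hp; rewrite /d /mderiv big_seq; apply: homog_sumP => m mp.
have [->|mi] := eqVneq (m i) 0%N; first by rewrite mul0r scale0r; exact: dhomog0.
apply: dhomogZ; apply: dhomogX'; rewrite -(hp m mp).
have le : (U_(i) <= m)%MM.
  by apply/mnm_lepP => l; rewrite mnm1E; case: eqP => // <-; rewrite lt0n.
by rewrite -{2}(submK le) mdegD mdeg1 addn1.
Qed.

Lemma EopE_sum (I : Type) (s : seq I) (F : I -> P) :
  Eop (\sum_(i <- s) F i) = \sum_(i <- s) Eop (F i).
Proof.
elim: s => [|i s IH]; first by rewrite !big_nil Eop0.
by rewrite !big_cons EopD IH.
Qed.

Lemma euler (p : P) k : p \is k.-homog -> Eop p = k%:R *: p.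
Proof.
move=> /dhomogP' hp; rewrite {1}(mpolyE p) EopE_sum [in RHS](mpolyE p) scaler_sumr.
rewrite !big_seq; apply: eq_bigr => m mp.
by rewrite EopZ EopX (hp m mp) scalerA mulrC -scalerA.
Qed.

Lemma hd_dhomog k (p : P) : homog_deg k p <-> p \is k.-homog.
Proof.
split => [H|/dhomogP H m nz].
  by apply/dhomogP => m; rewrite mcoeff_msupp; exact: H.
by apply: H; rewrite mcoeff_msupp.
Qed.

Lemma dXE (i j : 'I_3) : d j ('X_i : P) = (i == j)%:R.
Proof.
rewrite /d mderivX mnm1E; case: eqP => [<-|_]; last by rewrite scale0r.
have -> : (U_(i) - U_(i))%MM = 0%MM by apply/mnmP => l; rewrite mnmBE subnn mnm0E.
by rewrite mpolyX0 scale1r.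
Qed.

Lemma dXmul (i j : 'I_3) (p : P) : d j ('X_i * p) = (i == j)%:R *: p + 'X_i * d j p.
Proof. by rewrite /d mderivM -/(d j _) dXE scaler_nat mulr_natl. Qed.

Lemma sum_delta (F : 'I_3 -> P) (i : 'I_3) : \sum_j (i == j)%:R *: F j = F i.
Proof.
rewrite (bigD1 i) //= eqxx scale1r big1 ?addr0 // => j ji.
by rewrite eq_sym (negbTE ji) scale0r.
Qed.

Lemma dD i (p q : P) : d i (p + q) = d i p + d i q. Proof. exact: mderivD. Qed.
Lemma dB i (p q : P) : d i (p - q) = d i p - d i q. Proof. exact: mderivB. Qed.
Lemma dZ i c (p : P) : d i (c *: p) = c *: d i p. Proof. exact: mderivZ. Qed.
Lemma dM i (p q : P) : d i (p * q) = d i p * q + p * d i q. Proof. exact: mderivM. Qed.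
Lemma d_sum i (I : Type) (s : seq I) (F : I -> P) :
  d i (\sum_(j <- s) F j) = \sum_(j <- s) d i (F j).
Proof.
elim: s => [|j s IH]; first by rewrite !big_nil /d mderiv0.
by rewrite !big_cons dD IH.
Qed.
Lemma dC i j (p : P) : d i (d j p) = d j (d i p). Proof. exact: mderiv_comm. Qed.
Lemma d1 i : d i (1 : P) = 0.
Proof. by rewrite -mpolyX0 /d mderivX mnm0E scale0r. Qed.

Lemma lapD (p q : P) : lap (p + q) = lap p + lap q.
Proof. by rewrite /Defs.lap -big_split; apply: eq_bigr => i _; rewrite !dD. Qed.
Lemma lapB (p q : P) : lap (p - q) = lap p - lap q.
Proof. by rewrite /Defs.lap -sumrB; apply: eq_bigr => i _; rewrite !dB. Qed.
Lemma lapZ c (p : P) : lap (c *: p) = c *: lap p.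
Proof. by rewrite /Defs.lap scaler_sumr; apply: eq_bigr => i _; rewrite !dZ. Qed.
Lemma lap_sum (I : Type) (s : seq I) (F : I -> P) :
  lap (\sum_(j <- s) F j) = \sum_(j <- s) lap (F j).
Proof.
elim: s => [|j s IH]; first by rewrite !big_nil /Defs.lap big1 // => i _; rewrite /d !mderiv0.
by rewrite !big_cons lapD IH.
Qed.
Lemma lap_d i (p : P) : lap (d i p) = d i (lap p).
Proof. by rewrite /Defs.lap d_sum; apply: eq_bigr => j _; rewrite (dC j i) (dC j i). Qed.
Lemma lap_Xmul i (p : P) : lap ('X_i * p) = 2%:R *: d i p + 'X_i * lap p.
Proof.
rewrite /Defs.lap.
under eq_bigr => j _ do rewrite dXmul dD dZ dXmul.
rewrite !big_split /= !sum_delta -mulr_sumr.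
by rewrite scaler_nat mulr2n addrA.
Qed.


Definition gd (p q : P) : P := \sum_i d i p * d i q.

Lemma gdC (p q : P) : gd p q = gd q p.
Proof. by apply: eq_bigr => i _; rewrite mulrC. Qed.

Lemma orth (p q : P) k l : p \is k.-homog -> q \is l.-homog -> lap p = 0 ->
  Lw (gd q p) = (k * (k + l + 1))%:R * Lw (q * p).
Proof.
move=> hp hq lp.
have S1 : Lw (gd q p) = \sum_i Lw (d i (q * d i p)).
  rewrite -Lw_sum; congr Lw.
  have -> : gd q p = gd q p + q * lap p by rewrite lp mulr0 addr0.
  by rewrite /gd /Defs.lap mulr_sumr -big_split; apply: eq_bigr => i _; rewrite dM.
have S2 : forall i, Lw (d i (q * d i p)) = (l + k.-1 + 2)%:R * Lw ('X_i * (q * d i p)).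
  move=> i; rewrite Fid (@euler _ _ (dhomogM hq (homog_d _ _ i hp))) -scalerAr LwZ natrD; ring.
have S3 : \sum_i Lw ('X_i * (q * d i p)) = k%:R * Lw (q * p).
  rewrite -Lw_sum.
  have -> : \sum_i 'X_i * (q * d i p) = q * Eop p.
    by rewrite /Eop mulr_sumr; apply: eq_bigr => i _; rewrite mulrCA.
  by rewrite (@euler _ _ hp) -scalerAr LwZ.
rewrite S1 (eq_bigr _ (fun i _ => S2 i)) -mulr_sumr S3 mulrA -natrM.
congr (_ * _); congr (_%:R).
case: k {hp lp S1 S2 S3} => [|k] /=; first by rewrite !muln0 mul0n.
nia.
Qed.

Lemma orth0 (p q : P) k l : p \is k.-homog -> q \is l.-homog -> lap p = 0 -> lap q = 0 ->
  k != l -> Lw (q * p) = 0.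
Proof.
move=> hp hq lp lq kl.
have h1 := orth _ _ _ _ hp hq lp; have h2 := orth _ _ _ _ hq hp lq.
rewrite gdC h1 (mulrC p q) in h2.
apply/eqP; apply: contraLR kl; rewrite negbK => X0.
have := mulIf X0 h2; move/eqP; rewrite eqr_nat => /eqP H.
apply/eqP; nia.
Qed.
Arguments orth0 {p q k l}.


Definition VF := 'I_3 -> P.
Definition dotP (v w : VF) : P := \sum_i v i * w i.
Definition xdot (w : VF) : P := \sum_i 'X_i * w i.
Definition divP (w : VF) : P := \sum_i d i (w i).
Definition Apoly (w : VF) : VF := fun l => 'X_l * divP w - \sum_j 'X_j * d l (w j).
Definition GT (v w : VF) : P := \sum_i (gd (v i) (w i) - Eop (v i) * Eop (w i)).
Definition HH k (w : VF) := forall i, w i \is k.-homog /\ lap (w i) = 0.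

Lemma dotPC v w : dotP v w = dotP w v.
Proof. by apply: eq_bigr => i _; rewrite mulrC. Qed.

Lemma G1 k v w : HH k v -> HH k w -> Lw (GT v w) = (k * k.+1)%:R * Lw (dotP v w).
Proof.
move=> Hv Hw; rewrite /GT /dotP !Lw_sum mulr_sumr; apply: eq_bigr => i _.
have [hv lv] := Hv i; have [hw lw] := Hw i.
rewrite LwB (orth _ _ _ _ hw hv lw) (@euler _ _ hv) (@euler _ _ hw) -scalerAl -scalerAr !LwZ.
rewrite !natrM !natrD; ring.
Qed.

Lemma G2 k l v w : HH k v -> HH l w -> k != l -> Lw (dotP v w) = 0 /\ Lw (GT v w) = 0.
Proof.
move=> Hv Hw kl.
have H0 i : Lw (v i * w i) = 0.
  have [hv lv] := Hv i; have [hw lw] := Hw i.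
  by apply: (orth0 hw hv lw lv); rewrite eq_sym.
split; first by rewrite /dotP Lw_sum big1 // => i _; exact: H0.
rewrite /GT Lw_sum big1 // => i _.
have [hv lv] := Hv i; have [hw lw] := Hw i.
rewrite LwB (orth _ _ _ _ hw hv lw) (@euler _ _ hv) (@euler _ _ hw) -scalerAl -scalerAr !LwZ H0.
by rewrite !mulr0 subr0.
Qed.

Lemma sum_delta' (F : 'I_3 -> P) (i : 'I_3) : \sum_j (j == i)%:R *: F j = F i.
Proof. by rewrite -(sum_delta F i); apply: eq_bigr => j _; rewrite eq_sym. Qed.

Lemma lap1 : lap 1 = 0.
Proof. by rewrite /Defs.lap big1 // => i _; rewrite !d1 /d mderiv0. Qed.

Lemma homog_divP k w : HH k w -> divP w \is k.-1.-homog.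
Proof. by move=> Hw; apply: homog_sum => i; apply: homog_d; case: (Hw i). Qed.

Lemma homog_xdot k w : HH k w -> xdot w \is k.+1.-homog.
Proof.
move=> Hw; apply: homog_sum => i.
by apply: (dhomogM (homogX i)); case: (Hw i).
Qed.

Lemma homogB k (p q : P) : p \is k.-homog -> q \is k.-homog -> p - q \is k.-homog.
Proof. by move=> hp hq; apply: dhomogD => //; rewrite dhomogN. Qed.

Lemma AH k w : (1 <= k)%N -> HH k w -> HH k (Apoly w).
Proof.
move=> k1 Hw l; split.
  have e : k = (1 + k.-1)%N by rewrite add1n prednK.
  rewrite [in X in _ \is X.-homog]e; apply: homogB.
    by apply: dhomogM; [exact: homogX|exact: homog_divP].
  apply: homog_sum => j; apply: dhomogM; first exact: homogX.
  by apply: homog_d; case: (Hw j).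
have LD : lap (divP w) = 0.
  rewrite /divP lap_sum big1 // => i _; rewrite lap_d; case: (Hw i) => _ ->.
  by rewrite /d mderiv0.
rewrite /Apoly lapB lap_Xmul LD mulr0 addr0 lap_sum.
under eq_bigr => j _ do rewrite lap_Xmul lap_d (proj2 (Hw j)) /d mderiv0 mulr0 addr0 -/(d _ _) dC.
by rewrite -scaler_sumr /divP d_sum subrr.
Qed.

Lemma AD k w : (1 <= k)%N -> HH k w -> divP (Apoly w) = k.+1%:R *: divP w.
Proof.
move=> k1 Hw.
have ED := @euler _ _ (homog_divP _ _ Hw).
rewrite {1}/divP /Apoly.
under eq_bigr => l _ do rewrite dB dXmul eqxx scale1r.
rewrite sumrB big_split /= sumr_const card_ord -/(Eop (divP w)) ED.
under [X in _ - X]eq_bigr => l _ do rewrite d_sum.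
under [X in _ - X]eq_bigr => l _ do under eq_bigr => j _ do rewrite dXmul.
under [X in _ - X]eq_bigr => l _ do rewrite big_split /= sum_delta'.
rewrite big_split /= -/(divP w) exchange_big /=.
rewrite (_ : \sum_j \sum_i 'X_j * d i (d i (w j)) = 0); last first.
  by rewrite big1 // => j _; rewrite -mulr_sumr -/(lap _) (proj2 (Hw j)) mulr0.
rewrite addr0 -scaler_nat.
have -> : (k.+1 = 3 + k.-1 - 1)%N by lia.
rewrite natrB; last lia.
by rewrite natrD !scalerBl !scalerDl !scale1r.
Qed.

Lemma homog1 : (1 : P) \is 0.-homog.
Proof. exact: dhomog1. Qed.

Lemma G5 k u : (1 <= k)%N -> HH k u -> divP u = 0 ->
  (forall i, Lw (u i) = 0) /\ Lw (xdot u) = 0.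
Proof.
move=> k1 Hu du; split.
  move=> i; have [hu lu] := Hu i.
  rewrite -(mul1r (u i)); apply: (orth0 hu homog1 lu lap1).
  by rewrite -lt0n.
rewrite -(mul1r (xdot u)); apply: (orth0 (homog_xdot _ _ Hu) homog1 _ lap1) => //.
rewrite /xdot lap_sum.
under eq_bigr => j _ do rewrite lap_Xmul (proj2 (Hu j)) mulr0 addr0.
by rewrite -scaler_sumr -/(divP u) du scaler0.
Qed.


Lemma d_xdot l w : d l (xdot w) = w l + \sum_j 'X_j * d l (w j).
Proof.
rewrite /xdot d_sum; under eq_bigr => j _ do rewrite dXmul.
by rewrite big_split /= sum_delta'.
Qed.

Lemma G3 k v w : (forall i, v i \is k.-homog) -> (forall i, w i \is k.-homog) ->
  Lw (dotP v (Apoly w)) = Lw (xdot v * divP w) + Lw (divP v * xdot w)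
     - (2 * k + 3)%:R * Lw (xdot v * xdot w) + Lw (dotP v w).
Proof.
move=> hv hw.
have e1 : \sum_l v l * d l (xdot w) = dotP v w + \sum_l v l * (\sum_j 'X_j * d l (w j)).
  by rewrite /dotP -big_split; apply: eq_bigr => l _; rewrite d_xdot mulrDr.
have e2 : dotP v (Apoly w) = xdot v * divP w - \sum_l v l * (\sum_j 'X_j * d l (w j)).
  rewrite /dotP /Apoly /xdot mulr_suml -sumrB; apply: eq_bigr => l _.
  by rewrite mulrBr mulrA (mulrC (v l)).
have hxw : xdot w \is k.+1.-homog.
  by apply: homog_sum => i; apply: (dhomogM (homogX i)).
have e3 : \sum_l Lw (d l (v l * xdot w)) = (2 * k + 3)%:R * Lw (xdot v * xdot w).
  have -> : xdot v * xdot w = \sum_l 'X_l * (v l * xdot w).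
    by rewrite [xdot v]/xdot mulr_suml; apply: eq_bigr => l _; rewrite mulrA.
  rewrite Lw_sum mulr_sumr; apply: eq_bigr => l _.
  rewrite Fid (@euler _ _ (dhomogM (hv l) hxw)) -scalerAr LwZ.
  rewrite !natrD ?natrM; ring.
have e4 : \sum_l d l (v l * xdot w) = divP v * xdot w + \sum_l v l * d l (xdot w).
  by rewrite /divP mulr_suml -big_split; apply: eq_bigr => l _; rewrite dM.
have H1 : Lw (\sum_l v l * d l (xdot w)) =
    (2 * k + 3)%:R * Lw (xdot v * xdot w) - Lw (divP v * xdot w).
  by rewrite -e3 -Lw_sum e4 LwD; ring.
rewrite e1 LwD in H1.
have H2 : Lw (\sum_l v l * (\sum_j 'X_j * d l (w j))) =
    (2 * k + 3)%:R * Lw (xdot v * xdot w) - Lw (divP v * xdot w) - Lw (dotP v w).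
  by rewrite -H1; ring.
by rewrite e2 LwB H2; ring.
Qed.

Lemma Asym k v w : (forall i, v i \is k.-homog) -> (forall i, w i \is k.-homog) ->
  Lw (dotP v (Apoly w)) = Lw (dotP w (Apoly v)).
Proof.
move=> hv hw; rewrite (G3 _ _ _ hv hw) (G3 _ _ _ hw hv).
rewrite (mulrC (xdot w) (divP v)) (mulrC (divP w) (xdot v)) (mulrC (xdot w) (xdot v)) dotPC.
ring.
Qed.

End PartC.

Section PartD.
Variable R : realType.
Local Notation P := (poly3 R).
Local Notation d := (@d R).
Local Notation Lw := (@Lw R).

Lemma J00 : J R (2 * pi) 0 0 = 2 * pi.
Proof.
rewrite /J (_ : (fun t : R => sin t ^+ 0 * cos t ^+ 0) = (fun=> 1)); last first.
  by apply/funext => t; rewrite !expr0 mulr1.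
have := @RFTC R id (fun=> 1) 0 (2 * pi) (twopi_gt0 R) (@cst_continuous _ _ (1:R))
  (fun x => is_derive_id x 1).
by rewrite subr0.
Qed.

Lemma dNcos (x : R) : is_derive x (1:R) (fun y => - cos y) (sin x).
Proof. by have := is_deriveN (is_derive_cos x); rewrite opprK. Qed.

Lemma J10 : J R pi 1 0 = 2.
Proof.
rewrite /J (_ : (fun t : R => sin t ^+ 1 * cos t ^+ 0) = sin); last first.
  by apply/funext => t; rewrite expr0 mulr1 expr1.
rewrite (@RFTC R (fun x => - cos x) sin 0 pi (@pi_gt0 R) (@continuous_sin R) dNcos).
by rewrite cospi cos0 opprK; ring.
Qed.

Lemma Lw1 : Lw 1 = 4 * pi.
Proof.
rewrite -mpolyX0 LwX /Imon !mnm0E /= J00 J10; ring.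
Qed.

Lemma Lw1_neq0 : Lw 1 != 0.
Proof. by rewrite Lw1 mulf_neq0 // gt_eqF // pi_gt0. Qed.


Lemma evD (p q : P) x : ev (p + q) x = ev p x + ev q x. Proof. exact: mevalD. Qed.
Lemma evB (p q : P) x : ev (p - q) x = ev p x - ev q x. Proof. exact: mevalB. Qed.
Lemma evM (p q : P) x : ev (p * q) x = ev p x * ev q x. Proof. exact: mevalM. Qed.
Lemma evZ c (p : P) x : ev (c *: p) x = c * ev p x. Proof. exact: mevalZ. Qed.
Lemma evX (i : 'I_3) x : ev ('X_i : P) x = x i. Proof. exact: mevalXU. Qed.
Lemma ev1 x : ev (1 : P) x = 1. Proof. exact: meval1. Qed.
Lemma ev_sum (I : Type) (s : seq I) (F : I -> P) x :
  ev (\sum_(i <- s) F i) x = \sum_(i <- s) ev (F i) x.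
Proof.
elim: s => [|i s IH]; first by rewrite !big_nil /ev meval0.
by rewrite !big_cons evD IH.
Qed.

Lemma sph_on (t f : R) : on_sphere (sph t f).
Proof.
rewrite /on_sphere /dot !big_ord_recl big_ord0 /sph /=.
transitivity (sin t ^+ 2 * (cos f ^+ 2 + sin f ^+ 2) + cos t ^+ 2); first ring.
by rewrite cos2Dsin2 mulr1 addrC cos2Dsin2.
Qed.

Lemma Av_ext (g1 g2 : pt R -> R) : (forall x, on_sphere x -> g1 x = g2 x) -> Av g1 = Av g2.
Proof.
move=> H; rewrite /Av /sint; congr (_ / _); congr Rintegral; apply/funext => f.
by congr Rintegral; apply/funext => t; rewrite H //; exact: sph_on.
Qed.

Lemma Av_ev (p : P) : Av (ev p) = Lw p / Lw 1.
Proof.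
rewrite /Av sint_ev (_ : (fun _ => 1) = ev (1 : P)); last by apply/funext => x; rewrite ev1.
by rewrite sint_ev.
Qed.

Lemma AvL (g : pt R -> R) (p : P) : (forall x, on_sphere x -> g x = ev p x) ->
  Av g = Lw p / Lw 1.
Proof. by move=> H; rewrite (@Av_ext g (ev p) H) Av_ev. Qed.


Local Notation Eop := (@Eop R).
Local Notation gd := (@gd R).
Local Notation GT := (@GT R).
Local Notation dotP := (@dotP R).
Local Notation xdot := (@xdot R).
Local Notation divP := (@divP R).
Local Notation Apoly := (@Apoly R).

Lemma ev_Eop (p : P) x : ev (Eop p) x = dot x (grad p x).
Proof. by rewrite /Eop ev_sum /dot; apply: eq_bigr => j _; rewrite evM evX. Qed.

Lemma ev_gd (p q : P) x : ev (gd p q) x = dot (grad p x) (grad q x).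
Proof. by rewrite /gd ev_sum /dot; apply: eq_bigr => j _; rewrite evM. Qed.

Lemma pt_gradT (p q : P) x : on_sphere x ->
  dot (gradT p x) (gradT q x) = ev (gd p q) x - ev (Eop p) x * ev (Eop q) x.
Proof.
rewrite /on_sphere => hx; rewrite ev_gd !ev_Eop.
transitivity (dot (grad p x) (grad q x) - dot x (grad p x) * dot x (grad q x)
  + dot x (grad p x) * dot x (grad q x) * (dot x x - 1)); last by rewrite hx subrr mulr0 addr0.
rewrite /gradT /dot !big_ord_recl !big_ord0; ring.
Qed.

Lemma pt_gradT_dot (v w : 'I_3 -> P) x : on_sphere x ->
  gradT_dot v w x = ev (GT v w) x.
Proof.
move=> hx; rewrite /gradT_dot /GT ev_sum; apply: eq_bigr => i _.
by rewrite pt_gradT // evB evM.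
Qed.

Lemma pt_Aop (w : 'I_3 -> P) x l : Aop w x l = ev (Apoly w l) x.
Proof.
rewrite /Aop /Apoly /divS /divP /gradT /grad /dot evB evM evX !ev_sum.
rewrite !big_ord_recl !big_ord0 /= !evM !evX. ring.
Qed.

Lemma pt_dotA (v w : 'I_3 -> P) x : dot (evv v x) (Aop w x) = ev (dotP v (Apoly w)) x.
Proof. by rewrite /dot /dotP ev_sum; apply: eq_bigr => i _; rewrite evM pt_Aop. Qed.

Lemma pt_dot (v w : 'I_3 -> P) x : dot (evv v x) (evv w x) = ev (dotP v w) x.
Proof. by rewrite /dot /dotP ev_sum; apply: eq_bigr => i _; rewrite evM. Qed.

Lemma pt_xdot (w : 'I_3 -> P) x : dot (evv w x) x = ev (xdot w) x.
Proof. by rewrite /dot /xdot ev_sum; apply: eq_bigr => i _; rewrite evM evX mulrC. Qed.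

Lemma pt_div (w : 'I_3 -> P) x : \sum_i ev (d i (w i)) x = ev (divP w) x.
Proof. by rewrite /divP ev_sum. Qed.

Lemma QV3E (v w : 'I_3 -> P) : QV3 v w = 3 / 2 * (Lw (dotP v (Apoly w)) / Lw 1).
Proof. by rewrite /QV3 (@AvL _ (dotP v (Apoly w))) // => x _; rewrite pt_dotA. Qed.

Lemma AvGT (v w : 'I_3 -> P) : Av (gradT_dot v w) = Lw (GT v w) / Lw 1.
Proof. by apply: AvL => x hx; rewrite pt_gradT_dot. Qed.

Lemma W12E (v w : 'I_3 -> P) : W12 v w = Lw (dotP v w) / Lw 1 + Lw (GT v w) / Lw 1.
Proof.
rewrite /W12 AvGT (@AvL _ (dotP v w)) // => x _; exact: pt_dot.
Qed.

Lemma Q3E (v w : 'I_3 -> P) : Q3 v w = 3 / 4 * (Lw (GT v w) / Lw 1) - QV3 v w.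
Proof. by rewrite /Q3 AvGT. Qed.

Lemma eigL (v : 'I_3 -> P) (c : R) :
  (forall x, on_sphere x -> forall l, Aop v x l = c * evv v x l) ->
  forall u, Lw (dotP u (Apoly v)) = c * Lw (dotP u v).
Proof.
move=> H u.
have e1 := @AvL (fun x => dot (evv u x) (Aop v x)) (dotP u (Apoly v)) (fun x _ => pt_dotA u v x).
have e2 : Av (fun x => dot (evv u x) (Aop v x)) = Lw (c *: dotP u v) / Lw 1.
  apply: AvL => x hx; rewrite evZ -pt_dot /dot mulr_sumr; apply: eq_bigr => i _.
  by rewrite H // mulrCA.
rewrite e1 LwZ in e2.
by apply: (mulIf (invr_neq0 Lw1_neq0)); rewrite e2.
Qed.

End PartD.

Arguments AH {R}.
Arguments AD {R}.
Arguments G1 {R}.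
Arguments G2 {R}.
Arguments G3 {R}.
Arguments G5 {R}.
Arguments Asym {R}.
Arguments homogB {R}.
Arguments hd_dhomog {R}.
Arguments AvL {R}.
Arguments pt_div {R}.
Arguments pt_xdot {R}.
Arguments pt_dot {R}.
Arguments W12E {R}.
Arguments Lw1_neq0 {R}.
Arguments eigL {R}.
Arguments QV3E {R}.
Arguments Q3E {R}.
Arguments lapB {R}.
Arguments lapZ {R}.
Arguments dotPC {R}.
Arguments LwB {R}.
Arguments LwZ {R}.
Arguments LwD {R}.
Arguments AvGT {R}.
Section PartE.
Variable R : realType.
Local Notation P := (poly3 R).
Local Notation d := (@d R).
Local Notation Lw := (@Lw R).
Local Notation Eop := (@Eop R).
Local Notation gd := (@gd R).
Local Notation GT := (@GT R).
Local Notation dotP := (@dotP R).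
Local Notation xdot := (@xdot R).
Local Notation divP := (@divP R).
Local Notation Apoly := (@Apoly R).
Local Notation HH := (@HH R).

Lemma H3k_HH k (w : vfield R) : H3k k w -> HH k w.
Proof. by move=> [H _] i; have [/hd_dhomog h l] := H i. Qed.

Lemma H3ksol_HH k (w : vfield R) : H3k_sol k w -> HH k w.
Proof. by move=> [/H3k_HH]. Qed.

Definition uof k (w : vfield R) : vfield R := fun l => Apoly w l - k.+1%:R *: w l.

Lemma HH_u k w : (1 <= k)%N -> HH k w -> HH k (uof k w).
Proof.
move=> k1 Hw i; have [ha la] := AH _ _ k1 Hw i; have [hw lw] := Hw i.
split; first by apply: homogB => //; exact: dhomogZ.
by rewrite /uof lapB lapZ la lw scaler0 subr0.
Qed.

Lemma divP_u k w : (1 <= k)%N -> HH k w -> divP (uof k w) = 0.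
Proof.
move=> k1 Hw; rewrite /divP /uof.
under eq_bigr => i _ do rewrite dB dZ.
by rewrite sumrB -scaler_sumr -/(divP _) (AD _ _ k1 Hw) subrr.
Qed.

Lemma sol_u k w : (1 <= k)%N -> HH k w -> H3k_sol k (uof k w).
Proof.
move=> k1 Hw; have Hu := HH_u _ _ k1 Hw; have [G5a G5b] := G5 _ _ k1 Hu (divP_u _ _ k1 Hw).
split; last by move=> x _; rewrite pt_div (divP_u _ _ k1 Hw) /ev meval0.
split; first by move=> i; have [/hd_dhomog h l] := Hu i.
split; first by move=> i; rewrite (@AvL _ _ (uof k w i)) // G5a mul0r.
by rewrite (@AvL _ _ (xdot (uof k w))) ?G5b ?mul0r // => x _; rewrite pt_xdot.
Qed.

Lemma dotP_u k w : dotP (uof k w) w = dotP (Apoly w) w - k.+1%:R *: dotP w w.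
Proof.
rewrite /dotP /uof scaler_sumr -sumrB; apply: eq_bigr => i _.
by rewrite mulrBl -scalerAl.
Qed.

Lemma info3 k v : H3ki k 3 v -> HH k v /\ forall u, H3k_sol k u -> Lw (dotP u v) = 0.
Proof.
move=> [/H3k_HH Hv H]; split => // u su; have := H u su.
rewrite W12E (G1 _ _ _ (H3ksol_HH _ _ su) Hv) -mulrDl => /eqP; rewrite mulf_eq0 invr_eq0.
rewrite (negbTE Lw1_neq0) orbF -{1}(mul1r (Lw _)) -mulrDl mulf_eq0 => /orP[|/eqP //].
by rewrite -(natrD _ 1) pnatr_eq0.
Qed.

Lemma info12 k i v : (i = 1 \/ i = 2)%N -> H3ki k i v ->
  HH k v /\ H3k_sol k v /\
  forall u, Lw (dotP u (Apoly v)) = (if i == 1%N then - k%:R else 1) * Lw (dotP u v).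
Proof.
case=> ->; move=> [sv H]; (split; first exact: H3ksol_HH _ _ sv); split => //.
  by apply: eigL => x hx l; rewrite H.
by apply: eigL => x hx l; rewrite H // mul1r.
Qed.

Lemma cross k v w : HH k v -> HH k w -> Lw (dotP v w) = 0 ->
  Lw (dotP v (Apoly w)) = 0 -> QV3 v w = 0 /\ Q3 v w = 0.
Proof.
move=> Hv Hw e1 e2; have qv : QV3 v w = 0 by rewrite QV3E e2 mul0r mulr0.
by split => //; rewrite Q3E qv (G1 _ _ _ Hv Hw) e1 !mulr0 mul0r mulr0 subr0.
Qed.

Lemma kneq k l v w : (1 <= l)%N -> HH k v -> HH l w -> k != l ->
  QV3 v w = 0 /\ Q3 v w = 0.
Proof.
move=> l1 Hv Hw kl.
have qv : QV3 v w = 0.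
  by rewrite QV3E (proj1 (G2 _ _ _ _ Hv (AH _ _ l1 Hw) kl)) mul0r mulr0.
by split => //; rewrite Q3E qv (proj2 (G2 _ _ _ _ Hv Hw kl)) mul0r mulr0 subr0.
Qed.


Lemma H3ki_HH k i v : (1 <= i <= 3)%N -> H3ki k i v -> HH k v.
Proof.
case: i => [|[|[|[|i]]]] //= _.
- by case=> sv _; exact: H3ksol_HH _ _ sv.
- by case=> sv _; exact: H3ksol_HH _ _ sv.
- by case=> hv _; exact: H3k_HH _ _ hv.
Qed.

Definition eigP (lam : R) (v : vfield R) := forall u, Lw (dotP u (Apoly v)) = lam * Lw (dotP u v).

Lemma L12 k lam mu v w : lam != mu -> HH k v -> HH k w -> eigP lam v -> eigP mu w ->
  Lw (dotP v w) = 0 /\ Lw (dotP v (Apoly w)) = 0.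
Proof.
move=> lm Hv Hw ev ew.
have hv i := proj1 (Hv i); have hw i := proj1 (Hw i).
have e : mu * Lw (dotP v w) = lam * Lw (dotP v w).
  by rewrite -ew (Asym _ _ _ hv hw) ev dotPC.
have e1 : Lw (dotP v w) = 0.
  apply/eqP; apply: contraLR lm => X; rewrite negbK; apply/eqP; exact: esym (mulIf X e).
by split => //; rewrite ew e1 mulr0.
Qed.

Lemma L13 k lam v w : HH k v -> HH k w -> eigP lam v -> Lw (dotP v w) = 0 ->
  Lw (dotP v w) = 0 /\ Lw (dotP v (Apoly w)) = 0.
Proof.
move=> Hv Hw ev e1; split => //.
have hv i := proj1 (Hv i); have hw i := proj1 (Hw i).
by rewrite (Asym _ _ _ hv hw) ev dotPC e1 mulr0.
Qed.

Lemma L31 mu v w : eigP mu w -> Lw (dotP v w) = 0 ->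
  Lw (dotP v w) = 0 /\ Lw (dotP v (Apoly w)) = 0.
Proof. by move=> ew e1; split => //; rewrite ew e1 mulr0. Qed.

Lemma main_i k i : (1 <= k)%N -> (1 <= i <= 3)%N ->
  exists c C : R, forall w : vfield R, H3ki k i w ->
    QV3 w w = c * Av (gradT_dot w w) /\ Q3 w w = C * Av (gradT_dot w w).
Proof.
move=> k1 /andP[i1 i3].
have fromQV (c : R) (w : vfield R) : QV3 w w = c * Av (gradT_dot w w) -> Q3 w w = (3/4 - c) * Av (gradT_dot w w).
  by move=> H; rewrite /Q3 H; ring.
have K0 : (k * k.+1)%:R != 0 :> R by rewrite pnatr_eq0 muln_eq0 negb_or -lt0n k1.
have key lam w : HH k w -> Lw (dotP w (Apoly w)) = lam * Lw (dotP w w) ->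
    QV3 w w = (3/2 * lam / (k * k.+1)%:R) * Av (gradT_dot w w).
  move=> Hw e; rewrite QV3E AvGT (G1 _ _ _ Hw Hw) e.
  by field; rewrite Lw1_neq0 /= -(natrD _ 1) !pnatr_eq0 /=; lia.
case: i i1 i3 => [|[|[|[|i]]]] //= _ _.
- exists (3/2 * (- k%:R) / (k * k.+1)%:R), (3/4 - 3/2 * (- k%:R) / (k * k.+1)%:R).
  move=> w Hw; have [Hv [_ ev]] := info12 _ _ _ (or_introl erefl) Hw.
  have qv := key _ w Hv (ev w); split => //; exact: fromQV qv.
- exists (3/2 * 1 / (k * k.+1)%:R), (3/4 - 3/2 * 1 / (k * k.+1)%:R).
  move=> w Hw; have [Hv [_ ev]] := info12 _ _ _ (or_intror erefl) Hw.
  have qv := key _ w Hv (ev w); split => //; exact: fromQV qv.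
- exists (3/2 * k.+1%:R / (k * k.+1)%:R), (3/4 - 3/2 * k.+1%:R / (k * k.+1)%:R).
  move=> w Hw; have [Hv H] := info3 _ _ Hw.
  have := H _ (sol_u _ _ k1 Hv); rewrite dotP_u LwB LwZ => /eqP; rewrite subr_eq0 => /eqP e.
  rewrite dotPC in e.
  have qv := key _ w Hv e; split => //; exact: fromQV qv.
Qed.

Lemma main_ii k l i j : (1 <= k)%N -> (1 <= l)%N ->
     (1 <= i <= 3)%N -> (1 <= j <= 3)%N -> (k, i) <> (l, j) ->
     forall wki wlj : vfield R, H3ki k i wki -> H3ki l j wlj ->
       QV3 wki wlj = 0 /\ Q3 wki wlj = 0.
Proof.
move=> k1 l1 hi hj neq v w Hv Hw.
have HHv := H3ki_HH _ _ _ hi Hv; have HHw := H3ki_HH _ _ _ hj Hw.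
case: (eqVneq k l) => [e|kl]; last exact: kneq _ _ _ _ l1 HHv HHw kl.
subst l.
suff [e1 e2] : Lw (dotP v w) = 0 /\ Lw (dotP v (Apoly w)) = 0 by exact: cross _ _ _ HHv HHw e1 e2.
have k0 : (- k%:R : R) != 1.
  by rewrite -subr_eq0 -opprD oppr_eq0 -(natrD _ _ 1) pnatr_eq0 addn1.
case: i hi neq Hv => [|[|[|[|i]]]] //= _ neq Hv;
case: j hj neq Hw => [|[|[|[|j]]]] //= _ neq Hw.
- have [_ [_ ev]] := info12 _ _ _ (or_introl erefl) Hv.
  have [_ [_ ew]] := info12 _ _ _ (or_intror erefl) Hw.
  exact: (L12 _ _ _ _ _ k0 HHv HHw ev ew).
- have [_ [sv ev]] := info12 _ _ _ (or_introl erefl) Hv.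
  have [_ H] := info3 _ _ Hw.
  exact: (L13 _ _ _ _ HHv HHw ev (H _ sv)).
- have [_ [_ ev]] := info12 _ _ _ (or_intror erefl) Hv.
  have [_ [_ ew]] := info12 _ _ _ (or_introl erefl) Hw.
  by apply: (L12 _ _ _ _ _ _ HHv HHw ev ew); rewrite eq_sym.
- have [_ [sv ev]] := info12 _ _ _ (or_intror erefl) Hv.
  have [_ H] := info3 _ _ Hw.
  exact: (L13 _ _ _ _ HHv HHw ev (H _ sv)).
- have [_ H] := info3 _ _ Hv.
  have [_ [sw ew]] := info12 _ _ _ (or_introl erefl) Hw.
  by apply: (L31 _ _ _ ew); rewrite dotPC; exact: H.
- have [_ H] := info3 _ _ Hv.
  have [_ [sw ew]] := info12 _ _ _ (or_intror erefl) Hw.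
  by apply: (L31 _ _ _ ew); rewrite dotPC; exact: H.
Qed.

End PartE.

Theorem lemma4p9 (R : realType) :
  (forall (k i : nat), (1 <= k)%N -> (1 <= i <= 3)%N ->
     exists c C : R, forall w : vfield R, H3ki k i w ->
       QV3 w w = c * Av (gradT_dot w w) /\
       Q3 w w = C * Av (gradT_dot w w)) /\
  (forall (k l i j : nat), (1 <= k)%N -> (1 <= l)%N ->
     (1 <= i <= 3)%N -> (1 <= j <= 3)%N -> (k, i) <> (l, j) ->
     forall wki wlj : vfield R, H3ki k i wki -> H3ki l j wlj ->
       QV3 wki wlj = 0 /\ Q3 wki wlj = 0).
Proof. split; [exact: main_i | exact: main_ii]. Qed.
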